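(* Consider the click-through auction setting with two bidders with equal values $v_1=v_2=v\ge 0$, and let $0\le l<h\le 1$. Suppose the CTR vector equals $(l,h)$ with probability $1/2$ and $(h,l)$ with probability $1/2$. Then for every $\varepsilon>0$ there is a calibrated, correlated information structure (with finitely many signals) whose revenue is at least $vh-\varepsilon$.
   Context: Setting. Bidder $i$ has known value per click $v_i$. The CTR vector $r=(r_1,r_2)\in[0,1]^2$ is drawn from a prior $G$ with finite support. An information structure is a probability distribution with finite support on pairs $(r,s)\in[0,1]^2\times[0,1]^2$ whose $r$-marginal is $G$. Given signals $s$, the winner $i^*$ maximizes $v_is_i$ (uniform tie-breaking), pays per click $p_{i^*}=\max_{j\ne i^*}v_js_j/s_{i^*}$ (revenue $0$ if $s_{i^*}=0$), only upon a click, which occurs with probability $r_{i^*}$; revenue is $\mathbb{E}[r_{i^*}p_{i^*}]$. Calibrated: $\mathbb{E}[r_i\mid s_i=t]=t$ for every $i$ and every $t$ with $\Pr[s_i=t]>0$. Correlated: not independent, where independent means $\mathbb{E}[r_i\mid s]=\mathbb{E}[r_i\mid s_i]$ for all $i$ and all $s$ in the support. *)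

(* Defs.v *)
From Stdlib Require Import Reals List Lra Bool.
Import ListNotations.
Open Scope R_scope.
Open Scope bool_scope.

Inductive bidder := B1 | B2.

Record atom := mkAtom { w : R; r1 : R; r2 : R; s1 : R; s2 : R }.

(* A finitely supported information structure: a finite list of atoms
   (repeated (r,s) pairs simply add up their weights). *)
Definition infostruct := list atom.

Definition r_of (i : bidder) (a : atom) : R := match i with B1 => r1 a | B2 => r2 a end.
Definition s_of (i : bidder) (a : atom) : R := match i with B1 => s1 a | B2 => s2 a end.

Definition req (x y : R) : bool := if Req_EM_T x y then true else false.

Definition in01 (x : R) : Prop := 0 <= x <= 1.

Definition esum (I : infostruct) (P : atom -> bool) (f : atom -> R) : R :=
  fold_right Rplus 0 (map (fun a => if P a then w a * f a else 0) I).

Definition prob (I : infostruct) (P : atom -> bool) : R := esum I P (fun _ => 1).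

(* A prior on CTR vectors: finite list of (probability, (r1, r2)). *)
Definition prior := list (R * (R * R)).

Definition prior_mass (G : prior) (a b : R) : R :=
  fold_right Rplus 0 (map (fun p => if req (fst (snd p)) a && req (snd (snd p)) b
                                    then fst p else 0) G).

Definition is_infostruct (G : prior) (I : infostruct) : Prop :=
  (forall a, In a I -> 0 < w a /\ in01 (r1 a) /\ in01 (r2 a) /\ in01 (s1 a) /\ in01 (s2 a)) /\
  esum I (fun _ => true) (fun _ => 1) = 1 /\
  (forall x y : R, prob I (fun a => req (r1 a) x && req (r2 a) y) = prior_mass G x y).

Definition calibrated (I : infostruct) : Prop :=
  forall (i : bidder) (t : R),
    prob I (fun a => req (s_of i a) t) > 0 ->
    esum I (fun a => req (s_of i a) t) (r_of i) / prob I (fun a => req (s_of i a) t) = t.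

Definition independent (I : infostruct) : Prop :=
  forall (i : bidder) (x y : R),
    let Ps := fun a => req (s1 a) x && req (s2 a) y in
    let t := s_of i (mkAtom 0 0 0 x y) in
    let Pi := fun a => req (s_of i a) t in
    prob I Ps > 0 ->
    esum I Ps (r_of i) / prob I Ps = esum I Pi (r_of i) / prob I Pi.

Definition correlated (I : infostruct) : Prop := ~ independent I.

(* Per-click payment of bidder 1 (resp. 2) when winning; revenue 0 if its signal is 0. *)
Definition rev_if_win1 (v1 v2 : R) (a : atom) : R :=
  if req (s1 a) 0 then 0 else r1 a * (v2 * s2 a / s1 a).
Definition rev_if_win2 (v1 v2 : R) (a : atom) : R :=
  if req (s2 a) 0 then 0 else r2 a * (v1 * s1 a / s2 a).

(* Expected revenue from atom a, with uniform tie-breaking. *)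
Definition atom_revenue (v1 v2 : R) (a : atom) : R :=
  if Rlt_dec (v2 * s2 a) (v1 * s1 a) then rev_if_win1 v1 v2 a
  else if Rlt_dec (v1 * s1 a) (v2 * s2 a) then rev_if_win2 v1 v2 a
  else (rev_if_win1 v1 v2 a + rev_if_win2 v1 v2 a) / 2.

Definition revenue (v1 v2 : R) (I : infostruct) : R :=
  esum I (fun _ => true) (atom_revenue v1 v2).

Definition swap_prior (l h : R) : prior := [(1/2, (l, h)); (1/2, (h, l))].

(* Main.v *)
Require Import Defs.
From Stdlib Require Import Reals List Lra Lia Bool.
Import ListNotations.
Open Scope R_scope.

Fixpoint lsum (n : nat) (f : nat -> R) : R :=
  match n with O => 0 | S m => lsum m f + f m end.

Lemma lsum_ext n f g : (forall k, (k < n)%nat -> f k = g k) -> lsum n f = lsum n g.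
Proof. induction n; simpl; intros H; auto. rewrite IHn by (intros; apply H; lia). rewrite H by lia. auto. Qed.

Lemma lsum_shift n f : lsum (S n) f = f O + lsum n (fun k => f (S k)).
Proof. induction n; simpl in *. lra. rewrite IHn. lra. Qed.

Lemma lsum_plus n f g : lsum n (fun k => f k + g k) = lsum n f + lsum n g.
Proof. induction n; simpl; lra. Qed.

Lemma lsum_scal n c f : lsum n (fun k => c * f k) = c * lsum n f.
Proof. induction n; simpl; [lra|rewrite IHn; lra]. Qed.

Lemma lsum_le n f g : (forall k, (k < n)%nat -> f k <= g k) -> lsum n f <= lsum n g.
Proof. induction n; simpl; intros H. lra. assert (H1 := H n ltac:(lia)). assert (lsum n f <= lsum n g) by (apply IHn; intros; apply H; lia). lra. Qed.

Lemma lsum_pos n f : (0 < n)%nat -> (forall k, (k < n)%nat -> 0 < f k) -> 0 < lsum n f.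
Proof. induction n; simpl; intros Hn H. lia. destruct n. simpl. specialize (H 0%nat ltac:(lia)). lra.
 assert (0 < lsum (S n) f) by (apply IHn; [lia| intros; apply H; lia]). specialize (H (S n) ltac:(lia)). lra. Qed.

Lemma lsum_const n c : lsum n (fun _ => c) = INR n * c.
Proof. induction n; simpl lsum. simpl; lra. rewrite IHn, S_INR. lra. Qed.

Lemma esum_app I1 I2 P F : esum (I1 ++ I2) P F = esum I1 P F + esum I2 P F.
Proof. unfold esum. rewrite map_app. induction I1; simpl; [lra|]. rewrite IHI1. lra. Qed.

Lemma esum_map_seq {A} (g : A -> atom) (n : nat) P F (h : nat -> A) :
  esum (map (fun k => g (h k)) (seq 0 n)) P F =
  lsum n (fun k => if P (g (h k)) then w (g (h k)) * F (g (h k)) else 0).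
Proof.
  induction n. reflexivity.
  rewrite seq_S, map_app, esum_app, IHn. simpl. unfold esum; simpl. lra.
Qed.

Lemma esum_map_seq' (g : nat -> atom) (n : nat) P F :
  esum (map g (seq 0 n)) P F =
  lsum n (fun k => if P (g k) then w (g k) * F (g k) else 0).
Proof. exact (esum_map_seq g n P F (fun k => k)). Qed.

Lemma esum_minus I P f g : esum I P (fun a => f a - g a) = esum I P f - esum I P g.
Proof. unfold esum; induction I; simpl; [lra|]. rewrite IHI. destruct (P a); lra. Qed.

Lemma esum_const_on I P f c : (forall a, In a I -> P a = true -> f a = c) ->
  esum I P f = c * prob I P.
Proof. unfold prob, esum; induction I; simpl; intros H; [lra|].
  rewrite IHI by (intros; apply H; auto). destruct (P a) eqn:E; [rewrite (H a) by auto|]; lra. Qed.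

Lemma prob_const I P b : (forall a, In a I -> P a = b) ->
  prob I P = if b then esum I (fun _ => true) (fun _ => 1) else 0.
Proof. unfold prob, esum; induction I; simpl; intros H. destruct b; auto.
  rewrite IHI by (intros; apply H; auto). rewrite (H a) by auto. destruct b; lra. Qed.

Lemma prob_nonneg I P : (forall b, In b I -> 0 <= w b) -> 0 <= prob I P.
Proof. unfold prob, esum; induction I as [|c I IH]; simpl; intros H. lra.
  assert (0 <= w c) by (apply H; auto). assert (0 <= fold_right Rplus 0 (map (fun a0 => if P a0 then w a0 * 1 else 0) I)) by (apply IH; intros; apply H; auto).
  destruct (P c); lra. Qed.

Lemma prob_ge I P a : (forall b, In b I -> 0 <= w b) -> In a I -> P a = true -> w a <= prob I P.
Proof. induction I as [|c I IH]; simpl; intros H Hin HP. contradiction.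
  assert (Hn : 0 <= prob I P) by (apply prob_nonneg; intros; apply H; auto).
  unfold prob, esum in *; simpl.
  destruct Hin as [<-|Hin]. rewrite HP. lra.
  assert (w a <= fold_right Rplus 0 (map (fun a0 => if P a0 then w a0 * 1 else 0) I)) by (apply IH; auto).
  assert (0 <= w c) by (apply H; auto). destruct (P c); lra. Qed.

Lemma req_true x y : req x y = true <-> x = y.
Proof. unfold req; destruct (Req_EM_T x y); split; intros; congruence. Qed.

Definition PP (n j : nat) : R := INR j * (INR n + 1 - INR j).
Definition TT (n : nat) (l h : R) (j : nat) : R := l + (h - l) * (PP n j / (PP n j + PP n (S j))).
Definition SS (n : nat) : R := lsum n (fun k => PP n (S k)).

Lemma PP_nonneg n j : (j <= S n)%nat -> 0 <= PP n j.
Proof. intros H. unfold PP. apply le_INR in H. rewrite S_INR in H. assert (0 <= INR j) by apply pos_INR. nra. Qed.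

Lemma PP_pos n j : (1 <= j <= n)%nat -> 0 < PP n j.
Proof. intros [H1 H2]. unfold PP. apply le_INR in H1, H2. simpl in H1. nra. Qed.

Lemma den_pos n j : (1 <= n)%nat -> (j <= n)%nat -> 0 < PP n j + PP n (S j).
Proof. intros Hn Hj. destruct j.
  - assert (0 < PP n 1) by (apply PP_pos; lia). unfold PP at 1; simpl. lra.
  - assert (0 < PP n (S j)) by (apply PP_pos; lia). assert (0 <= PP n (S (S j))) by (apply PP_nonneg; lia). lra.
Qed.

Lemma TT_range n l h j : (1 <= n)%nat -> (j <= n)%nat -> l <= h -> l <= TT n l h j <= h.
Proof. intros Hn Hj Hlh. unfold TT.
  assert (D := den_pos n j Hn Hj). assert (0 <= PP n j) by (apply PP_nonneg; lia).
  assert (0 <= PP n (S j)) by (apply PP_nonneg; lia).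
  assert (0 <= PP n j / (PP n j + PP n (S j)) <= 1).
  { set (q := PP n j / (PP n j + PP n (S j))).
    assert (q * (PP n j + PP n (S j)) = PP n j) by (unfold q; field; lra). nra. }
  nra. Qed.

Lemma key n l h j : (1 <= n)%nat -> (j <= n)%nat ->
  PP n (S j) * (TT n l h j - l) = PP n j * (h - TT n l h j).
Proof. intros Hn Hj. assert (D := den_pos n j Hn Hj). unfold TT. field. lra. Qed.

Lemma poly_id (x N : R) :
  let p0 := x * (N - x) in let p1 := (x+1) * (N - (x+1)) in let p2 := (x+2)*(N-(x+2)) in
  p1 * p1 - p0 * p2 = (x+1)*(x+1) + (N-(x+1))*(N-(x+1)) - 1.
Proof. simpl. ring. Qed.

Lemma TT_lt n l h k : (1 <= n)%nat -> (k < n)%nat -> l < h -> TT n l h k < TT n l h (S k).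
Proof. intros Hn Hk Hlh. unfold TT.
  assert (D0 := den_pos n k Hn ltac:(lia)). assert (D1 := den_pos n (S k) Hn ltac:(lia)).
  set (p0 := PP n k) in *. set (p1 := PP n (S k)) in *. set (p2 := PP n (S (S k))) in *.
  assert (H : p0 * p2 < p1 * p1).
  { assert (E : p1 * p1 - p0 * p2 = (INR k+1)*(INR k+1) + (INR n + 1 -(INR k+1))*(INR n + 1-(INR k+1)) - 1).
    { unfold p0, p1, p2, PP. rewrite !S_INR. ring. }
    assert (0 <= INR k) by apply pos_INR. assert (INR (S k) <= INR n) by (apply le_INR; lia). rewrite S_INR in *. nra. }
  assert (p0 / (p0 + p1) < p1 / (p1 + p2)).
  { apply (Rmult_lt_reg_r ((p0+p1)*(p1+p2))). nra.
    field_simplify; try lra. }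
  nra. Qed.

Lemma poly_bound j N : 1 <= j -> j <= N - 1 -> 2 <= N ->
 j*j+(N-j)*(N-j)-1 <= N*((j-1)*(N-j+1)+j*(N-j)).
Proof. intros. assert (0 <= (j-1)*(N-1-j)) by nra. nra. Qed.

Lemma loss n l h k : (1 <= n)%nat -> (k < n)%nat -> 0 <= l -> l < h ->
  PP n (S k) * (1 - TT n l h k / TT n l h (S k)) <= INR n + 1.
Proof. intros Hn Hk Hl Hlh.
  assert (Hlt := TT_lt n l h k Hn Hk Hlh).
  assert (R0 := TT_range n l h k Hn ltac:(lia) ltac:(lra)).
  assert (Tpos : 0 < TT n l h (S k)) by lra.
  revert Hlt Tpos R0. unfold TT.
  assert (D0 := den_pos n k Hn ltac:(lia)). assert (D1 := den_pos n (S k) Hn ltac:(lia)).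
  assert (P1 : 0 < PP n (S k)) by (apply PP_pos; lia).
  assert (P0 : 0 <= PP n k) by (apply PP_nonneg; lia).
  assert (P2 : 0 <= PP n (S (S k))) by (apply PP_nonneg; lia).
  assert (Hpoly : PP n (S k) * PP n (S k) - PP n k * PP n (S (S k)) <= (INR n + 1) * (PP n k + PP n (S k))).
  { unfold PP. rewrite !S_INR.
    assert (0 <= INR k) by apply pos_INR. assert (INR (S k) <= INR n) by (apply le_INR; lia).
    assert (1 <= INR n) by (apply (le_INR 1); lia). rewrite S_INR in *.
    pose proof (poly_bound (INR k + 1) (INR n + 1) ltac:(lra) ltac:(lra) ltac:(lra)).
    replace (INR k + 1 + 1) with ((INR k + 1) + 1) by ring. nra. }
  set (p0 := PP n k) in *. set (p1 := PP n (S k)) in *. set (p2 := PP n (S (S k))) in *.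
  set (a := p0 / (p0 + p1)). set (b := p1 / (p1 + p2)).
  assert (Ea : a * (p0 + p1) = p0) by (unfold a; field; lra).
  assert (Eb : b * (p1 + p2) = p1) by (unfold b; field; lra).
  intros Hlt Tpos _.
  assert (Hab : a < b) by nra.
  assert (bpos : 0 < b) by nra.
  set (d := h - l) in *.
  assert (S1 : 1 - (l + d * a) / (l + d * b) = d * (b - a) / (l + d * b)) by (field; lra).
  rewrite S1.
  assert (S2 : d * (b - a) / (l + d * b) <= (b - a) / b).
  { apply (Rmult_le_reg_r ((l + d*b) * b)). nra.
    replace (d * (b - a) / (l + d * b) * ((l + d * b) * b)) with (d*(b-a)*b) by (field; lra).
    replace ((b - a) / b * ((l + d * b) * b)) with ((b-a)*(l+d*b)) by (field; lra). nra. }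
  assert (S3 : p1 * ((b - a) / b) = (p1 + p2) * (b - a)) by (rewrite <- Eb at 1; field; lra).
  assert (p1 * (d * (b - a) / (l + d * b)) <= p1 * ((b-a)/b)) by (apply Rmult_le_compat_l; lra).
  assert ((p1 + p2) * (b - a) <= INR n + 1).
  { apply (Rmult_le_reg_r (p0 + p1)). lra.
    replace ((p1 + p2) * (b - a) * (p0 + p1)) with (p1 * (p0+p1) - (p1+p2) * (a * (p0+p1))) by (transitivity (b*(p1+p2)*(p0+p1) - (p1+p2)*(a*(p0+p1))); [rewrite Eb; ring|ring]).
    rewrite Ea. nra. }
  lra.
Qed.

Lemma SS_closed n : SS n = INR n * (INR n + 1) * (INR n + 2) / 6.
Proof.
  unfold SS.
  assert (forall m, lsum m (fun k => PP n (S k)) = (INR n + 1) * INR m * (INR m + 1) / 2 - INR m * (INR m + 1) * (2 * INR m + 1) / 6).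
  { induction m. simpl. lra. change (lsum (S m) (fun k => PP n (S k))) with (lsum m (fun k => PP n (S k)) + PP n (S m)). rewrite IHm. unfold PP. rewrite !S_INR. field. }
  rewrite H. field.
Qed.

Definition WW (n k : nat) : R := PP n (S k) / (2 * SS n).
Definition A1 n l h k := mkAtom (WW n k) l h (TT n l h k) (TT n l h (S k)).
Definition A2 n l h k := mkAtom (WW n k) h l (TT n l h (S k)) (TT n l h k).
Definition Ilad n l h := map (A1 n l h) (seq 0 n) ++ map (A2 n l h) (seq 0 n).

Lemma SS_pos n : (1 <= n)%nat -> 0 < SS n.
Proof. intros Hn. unfold SS. apply lsum_pos. lia. intros; apply PP_pos; lia. Qed.

Lemma WW_pos n k : (k < n)%nat -> 0 < WW n k.
Proof. intros Hk. unfold WW. assert (0 < PP n (S k)) by (apply PP_pos; lia).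
  assert (0 < SS n) by (apply SS_pos; lia). apply Rdiv_lt_0_compat; lra. Qed.

Lemma WW_sum n : (1 <= n)%nat -> lsum n (fun k => WW n k * 1) = 1/2.
Proof. intros Hn. assert (0 < SS n) by (apply SS_pos; lia).
  rewrite (lsum_ext n _ (fun k => / (2 * SS n) * PP n (S k))) by (intros; unfold WW; field; lra).
  rewrite lsum_scal. fold (SS n). field. lra. Qed.

Lemma In_Ilad n l h a : In a (Ilad n l h) ->
  (exists k, (k < n)%nat /\ a = A1 n l h k) \/ (exists k, (k < n)%nat /\ a = A2 n l h k).
Proof. unfold Ilad. rewrite in_app_iff, !in_map_iff. intros [[k [<- Hk]]|[k [<- Hk]]];
  apply in_seq in Hk; [left|right]; exists k; split; auto; lia. Qed.

Lemma ladder_sum n (f g : nat -> R) :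
  g O = 0 -> f n = 0 -> (forall j, (j <= n)%nat -> f j + g j = 0) ->
  lsum n f + lsum n (fun k => g (S k)) = 0.
Proof. intros Hg Hf H.
  assert (E1 : lsum (S n) f = lsum n f) by (simpl; rewrite Hf; lra).
  assert (E2 : lsum (S n) g = lsum n (fun k => g (S k))) by (rewrite lsum_shift, Hg; lra).
  rewrite <- E1, <- E2, <- lsum_plus.
  rewrite (lsum_ext _ _ (fun _ => 0)) by (intros; apply H; lia).
  rewrite lsum_const. lra. Qed.

Lemma PP_0 n : PP n 0 = 0.
Proof. unfold PP; simpl; ring. Qed.
Lemma PP_Sn n : PP n (S n) = 0.
Proof. unfold PP; rewrite S_INR; ring. Qed.

Section Lad.
Variables (n : nat) (l h : R).
Hypotheses (Hn : (1 <= n)%nat) (Hl : 0 <= l) (Hlh : l < h) (Hh : h <= 1).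

Lemma fg_zero t j : (j <= n)%nat ->
  (if req (TT n l h j) t then WW n j * (l - TT n l h j) else 0) +
  (if req (TT n l h j) t then PP n j / (2 * SS n) * (h - TT n l h j) else 0) = 0.
Proof. intros Hj. assert (0 < SS n) by (apply SS_pos; lia).
  destruct (req _ _); [|lra]. unfold WW.
  pose proof (key n l h j Hn Hj).
  replace (PP n (S j) / (2 * SS n) * (l - TT n l h j) + PP n j / (2 * SS n) * (h - TT n l h j))
    with ((PP n j * (h - TT n l h j) - PP n (S j) * (TT n l h j - l)) / (2 * SS n)) by (field; lra).
  rewrite H0. field; lra. Qed.

Lemma calib_zero i t :
  esum (Ilad n l h) (fun a => req (s_of i a) t) (fun a => r_of i a - s_of i a) = 0.
Proof.
  assert (0 < SS n) by (apply SS_pos; lia).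
  set (f := fun j => if req (TT n l h j) t then WW n j * (l - TT n l h j) else 0).
  set (g := fun j => if req (TT n l h j) t then PP n j / (2 * SS n) * (h - TT n l h j) else 0).
  assert (Z : lsum n f + lsum n (fun k => g (S k)) = 0).
  { apply ladder_sum.
    - unfold g. rewrite PP_0. destruct (req _ _); field; lra.
    - unfold f, WW. rewrite PP_Sn. destruct (req _ _); field; lra.
    - intros j Hj. apply fg_zero; auto. }
  unfold Ilad. rewrite esum_app, !esum_map_seq'.
  destruct i.
  - change (lsum n f + lsum n (fun k => g (S k)) = 0). exact Z.
  - change (lsum n (fun k => g (S k)) + lsum n f = 0). lra.
Qed.

Lemma Ilad_w a : In a (Ilad n l h) -> 0 < w a.
Proof. intros [[k [Hk ->]]|[k [Hk ->]]]%In_Ilad; simpl; apply WW_pos; auto. Qed.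

Lemma Ilad_calibrated : calibrated (Ilad n l h).
Proof.
  intros i t Hp.
  pose proof (calib_zero i t) as Z. rewrite esum_minus in Z.
  rewrite (esum_const_on _ _ (s_of i) t) in Z by (intros a _ Ha; apply req_true; auto).
  replace (esum (Ilad n l h) (fun a => req (s_of i a) t) (r_of i)) with (t * prob (Ilad n l h) (fun a => req (s_of i a) t)) by lra.
  field. lra.
Qed.

Lemma Ilad_info : is_infostruct (swap_prior l h) (Ilad n l h).
Proof.
  assert (0 < SS n) by (apply SS_pos; lia).
  split; [|split].
  - intros a Ha. split. apply Ilad_w; auto.
    apply In_Ilad in Ha. destruct Ha as [[k [Hk ->]]|[k [Hk ->]]]; simpl;
    pose proof (TT_range n l h k Hn ltac:(lia) ltac:(lra));
    pose proof (TT_range n l h (S k) Hn ltac:(lia) ltac:(lra)); unfold in01; repeat split; lra.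
  - unfold Ilad. rewrite esum_app, !esum_map_seq'. simpl.
    rewrite !WW_sum by auto. lra.
  - intros x y. unfold prob, Ilad. rewrite esum_app.
    fold (prob (map (A1 n l h) (seq 0 n)) (fun a => req (r1 a) x && req (r2 a) y)).
    fold (prob (map (A2 n l h) (seq 0 n)) (fun a => req (r1 a) x && req (r2 a) y)).
    rewrite (prob_const _ _ (req l x && req h y)).
    2:{ intros a Ha. apply in_map_iff in Ha. destruct Ha as [k [<- _]]. reflexivity. }
    rewrite (prob_const _ _ (req h x && req l y)).
    2:{ intros a Ha. apply in_map_iff in Ha. destruct Ha as [k [<- _]]. reflexivity. }
    rewrite !esum_map_seq'. simpl lsum. unfold prior_mass, swap_prior. simpl.
    rewrite !WW_sum by auto.
    destruct (req l x && req h y); destruct (req h x && req l y); lra.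
Qed.

Lemma TT_0 : TT n l h 0 = l.
Proof. unfold TT. rewrite PP_0. unfold Rdiv. ring. Qed.

Lemma Ilad_correlated : (2 <= n)%nat -> correlated (Ilad n l h).
Proof.
  intros Hn2 Hind.
  specialize (Hind Defs.B1 (TT n l h 1) (TT n l h 2)). cbv zeta in Hind. cbn [s_of s1] in Hind.
  set (Ps := fun a => req (s1 a) (TT n l h 1) && req (s2 a) (TT n l h 2)) in Hind.
  set (Pi := fun a => req (s1 a) (TT n l h 1)) in Hind.
  assert (Hin : In (A1 n l h 1) (Ilad n l h)).
  { unfold Ilad. apply in_or_app. left. apply in_map. apply in_seq. lia. }
  assert (Hw : forall b, In b (Ilad n l h) -> 0 <= w b) by (intros b Hb; apply Rlt_le, Ilad_w; auto).
  assert (W1 : 0 < w (A1 n l h 1)) by (apply Ilad_w; auto).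
  assert (Hps : w (A1 n l h 1) <= prob (Ilad n l h) Ps).
  { apply prob_ge; auto. unfold Ps; simpl. rewrite !(proj2 (req_true _ _) eq_refl). auto. }
  assert (Hpi : w (A1 n l h 1) <= prob (Ilad n l h) Pi).
  { apply prob_ge; auto. unfold Pi; simpl. rewrite !(proj2 (req_true _ _) eq_refl). auto. }
  specialize (Hind ltac:(lra)).
  assert (E1 : esum (Ilad n l h) Ps (r_of Defs.B1) = l * prob (Ilad n l h) Ps).
  { apply esum_const_on. intros a Ha HP. apply In_Ilad in Ha.
    destruct Ha as [[k [Hk ->]]|[k [Hk ->]]]. reflexivity.
    exfalso. unfold Ps in HP; simpl in HP. apply andb_prop in HP. destruct HP as [H1 H2].
    apply req_true in H1, H2.
    pose proof (TT_lt n l h 1 Hn ltac:(lia) Hlh). pose proof (TT_lt n l h k Hn Hk Hlh). lra. }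
  pose proof (Ilad_calibrated Defs.B1 (TT n l h 1)) as C. cbn [s_of r_of] in C.
  fold Pi in C. specialize (C ltac:(lra)).
  rewrite E1 in Hind. cbn [r_of] in Hind. rewrite C in Hind.
  replace (l * prob (Ilad n l h) Ps / prob (Ilad n l h) Ps) with l in Hind by (field; lra).
  pose proof (TT_lt n l h 0 Hn ltac:(lia) Hlh). rewrite TT_0 in H. lra.
Qed.

End Lad.

Lemma atom_rev_gen v x y rl rh : 0 <= v -> 0 <= x -> x < y ->
  atom_revenue v v (mkAtom 0 rl rh x y) = v * rh * (x / y) /\
  atom_revenue v v (mkAtom 0 rh rl y x) = v * rh * (x / y).
Proof. intros Hv Hx Hxy.
  unfold atom_revenue, rev_if_win1, rev_if_win2, req. cbn [s1 s2 r1 r2].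
  destruct (Req_EM_T v 0) as [->|Hv0].
  - split; repeat (destruct (Rlt_dec _ _)); repeat (destruct (Req_EM_T _ _)); unfold Rdiv; ring.
  - assert (0 < v) by lra. split.
    + destruct (Rlt_dec (v * y) (v * x)). nra.
      destruct (Rlt_dec (v * x) (v * y)); [|nra].
      destruct (Req_EM_T y 0). lra. field. lra.
    + destruct (Rlt_dec (v * x) (v * y)); [|nra].
      destruct (Req_EM_T y 0). lra. field. lra.
Qed.

Lemma ar_w v a b : atom_revenue v v a = atom_revenue v v (mkAtom b (r1 a) (r2 a) (s1 a) (s2 a)).
Proof. destruct a; reflexivity. Qed.

Lemma revenue_bound n l h v : (1 <= n)%nat -> 0 <= l -> l < h -> h <= 1 -> 0 <= v ->
  revenue v v (Ilad n l h) >= v * h - 6 * v / (INR n + 2).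
Proof.
  intros Hn Hl Hlh Hh Hv.
  assert (HS : 0 < SS n) by (apply SS_pos; lia).
  set (rho := fun k => TT n l h k / TT n l h (S k)).
  assert (Hr : forall k, (k < n)%nat -> atom_revenue v v (A1 n l h k) = v * h * rho k /\
                                     atom_revenue v v (A2 n l h k) = v * h * rho k).
  { intros k Hk. rewrite (ar_w _ (A1 n l h k) 0), (ar_w _ (A2 n l h k) 0). cbn [A1 A2 r1 r2 s1 s2].
    pose proof (TT_range n l h k Hn ltac:(lia) ltac:(lra)).
    apply atom_rev_gen; auto. lra. apply TT_lt; auto. }
  unfold revenue, Ilad. rewrite esum_app, !esum_map_seq'.
  rewrite (lsum_ext n (fun k => w (A1 n l h k) * atom_revenue v v (A1 n l h k)) (fun k => v * h / (2 * SS n) * (PP n (S k) * rho k)))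
    by (intros k Hk; simpl; destruct (Hr k Hk) as [E1 E2]; rewrite ?E1, ?E2; unfold WW; field; lra).
  rewrite (lsum_ext n (fun k => w (A2 n l h k) * atom_revenue v v (A2 n l h k)) (fun k => v * h / (2 * SS n) * (PP n (S k) * rho k)))
    by (intros k Hk; simpl; destruct (Hr k Hk) as [E1 E2]; rewrite ?E1, ?E2; unfold WW; field; lra).
  rewrite !lsum_scal.
  assert (E : lsum n (fun k => PP n (S k) * rho k) =
              SS n + -1 * lsum n (fun k => PP n (S k) * (1 - rho k))).
  { rewrite <- lsum_scal. unfold SS. rewrite <- lsum_plus. apply lsum_ext. intros; ring. }
  assert (Lb : lsum n (fun k => PP n (S k) * (1 - rho k)) <= INR n * (INR n + 1)).
  { rewrite <- lsum_const. apply lsum_le. intros k Hk. apply loss; auto. }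
  rewrite E. rewrite SS_closed in *.
  assert (1 <= INR n) by (apply (le_INR 1); lia).
  set (L := lsum n (fun k => PP n (S k) * (1 - rho k))) in *.
  assert (0 <= v * h) by nra.
  assert (Q : v * h / (2 * (INR n * (INR n + 1) * (INR n + 2) / 6)) *
     (INR n * (INR n + 1) * (INR n + 2) / 6 + -1 * L) * 2 = v * h - v * h * 6 * L / (INR n * (INR n + 1) * (INR n + 2))).
  { field. lra. }
  assert (v * h * 6 * L / (INR n * (INR n + 1) * (INR n + 2)) <= 6 * v / (INR n + 2)).
  { apply (Rmult_le_reg_r (INR n * (INR n + 1) * (INR n + 2))). nra.
    replace (v * h * 6 * L / (INR n * (INR n + 1) * (INR n + 2)) * (INR n * (INR n + 1) * (INR n + 2))) with (v * h * 6 * L) by (field; lra).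
    replace (6 * v / (INR n + 2) * (INR n * (INR n + 1) * (INR n + 2))) with (6 * v * (INR n * (INR n + 1))) by (field; lra).
    assert (v * h * L <= v * (INR n * (INR n + 1))).
    { apply Rle_trans with (v * h * (INR n * (INR n + 1))). apply Rmult_le_compat_l; lra.
      assert (0 <= INR n * (INR n + 1)) by nra. apply Rmult_le_compat_r; [lra|]. nra. }
    nra. }
  lra.
Qed.

Theorem mainTheorem4 (v l h : R) :
  0 <= v -> 0 <= l -> l < h -> h <= 1 ->
  forall eps : R, eps > 0 ->
  exists I : infostruct,
    is_infostruct (swap_prior l h) I /\ calibrated I /\ correlated I /\
    revenue v v I >= v * h - eps.
Proof.
  intros Hv Hl Hlh Hh eps He.
  destruct (INR_unbounded (6 * v / eps)) as [m Hm].
  exists (Ilad (S (S m)) l h).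
  split; [apply Ilad_info; auto; lia|].
  split; [apply Ilad_calibrated; auto; lia|].
  split; [apply Ilad_correlated; auto; lia|].
  pose proof (revenue_bound (S (S m)) l h v ltac:(lia) Hl Hlh Hh Hv).
  assert (6 * v / (INR (S (S m)) + 2) <= eps).
  { rewrite !S_INR. assert (0 <= INR m) by apply pos_INR.
    apply (Rmult_le_reg_r (INR m + 1 + 1 + 2)). lra.
    replace (6 * v / (INR m + 1 + 1 + 2) * (INR m + 1 + 1 + 2)) with (6 * v) by (field; lra).
    assert (6 * v / eps * eps = 6 * v) by (field; lra). nra. }
  lra.
Qed.
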